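(* Let $\Phi \in \mathbb{R}^{m\times n}$, let $x_0\in\mathbb{R}^n$ be nonzero with support $I\eqdef\{i: x_{0,i}\neq 0\}$, and assume $x_0$ is identifiable, i.e. $x_0$ is a solution of $\min_x\|x\|_1$ subject to $\Phi x=\Phi x_0$. Let $p_1 \in \operatorname{Argmin}_{p\in\mathcal{D}_{x_0}}\|p\|_1$, where $$\mathcal{D}_{x_0} \eqdef \{ p \in \mathbb{R}^m : \Phi_{\cdot,I}^* p = \operatorname{sign}(x_{0,I}),\ \|\Phi^* p\|_\infty \le 1\},$$ let $J \eqdef \{ i : |(\Phi^* p_1)_i| = 1\}$, $S \eqdef \operatorname{supp}(p_1) = \{ j : p_{1,j}\neq 0\}$, $s_J \eqdef \Phi_{\cdot,J}^* p_1 \in\{-1,1\}^{|J|}$ and $q_S \eqdef \operatorname{sign}(p_{1,S}) \in \{-1,1\}^{|S|}$. Assume that $\Phi_{S,J}$ has full rank and that $$s_J \notin \operatorname{Im}(\Phi_{S',J}^* ) \ \ \text{for all } S'\subseteq\{1,\dots,m\} \text{ with } |S'|<|J|, \qquad q_S\notin\operatorname{Im}(\Phi_{S,J'}) \ \ \text{for all } J'\subseteq\{1,\dots,n\} \text{ with } |J'|<|S|.$$ Then $|S|=|J|$ and $\Phi_{S,J}$ is invertible. Consequently, with $T_1 \eqdef \{u\in\mathbb{R}^m : \operatorname{supp}(u)\subseteq S\}$, one has $P_{T_1}\Phi_{\cdot,J} = \mathrm{Id}_{\cdot,S}\Phi_{S,J}$ and $\operatorname{Ker}(P_{T_1}\Phi_{\cdot,J})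 = \{0\}$.
   Context: $\operatorname{sign}$ acts entrywise. $\Phi_{S,J}$ denotes the submatrix of $\Phi$ with rows in $S$ and columns in $J$, a dot meaning all rows/columns are kept, and $\Phi_{S,J}^*\eqdef(\Phi_{S,J})^*$. $\mathrm{Id}_{\cdot,S}$ is the submatrix of the $m\times m$ identity with columns in $S$. $P_V$ is the orthogonal projector onto a subspace $V$; $T_1$ is the orthogonal complement of the subspace parallel to $\partial\|p_1\|_\infty$... more precisely, $T_1=\mathrm{par}(\partial\|p_1\|_1)^\perp$, which equals the set of vectors supported in $S$. *)

(* Defs.v *)
From HB Require Import structures.
From mathcomp Require Import all_boot all_order all_algebra.
Set Implicit Arguments. Unset Strict Implicit. Unset Printing Implicit Defensive.
Import Order.TTheory GRing.Theory Num.Theory.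
Local Open Scope ring_scope.

Section Defs.
Variable R : realFieldType.

Definition l1norm {k} (v : 'cV[R]_k) : R := \sum_i `|v i 0|.

Definition supp {k} (v : 'cV[R]_k) : {set 'I_k} := [set i | v i 0 != 0].

(* Phi_{S,J}: rows in S, columns in J (in increasing order, via enum_val) *)
Definition subm {m n} (A : 'M[R]_(m, n)) (S : {set 'I_m}) (J : {set 'I_n})
  : 'M[R]_(#|S|, #|J|) := \matrix_(i, j) A (enum_val i) (enum_val j).

Definition subcols {m n} (A : 'M[R]_(m, n)) (J : {set 'I_n})
  : 'M[R]_(m, #|J|) := \matrix_(i, j) A i (enum_val j).

Definition Id_cols m (S : {set 'I_m}) : 'M[R]_(m, #|S|) :=
  \matrix_(i, j) (i == enum_val j)%:R.

Definition subvec {k} (v : 'cV[R]_k) (S : {set 'I_k}) : 'cV[R]_#|S| :=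
  \col_j v (enum_val j) 0.

Definition identifiable {m n} (Phi : 'M[R]_(m, n)) (x0 : 'cV[R]_n) : Prop :=
  forall x : 'cV[R]_n, Phi *m x = Phi *m x0 -> l1norm x0 <= l1norm x.

Definition in_D {m n} (Phi : 'M[R]_(m, n)) (x0 : 'cV[R]_n) (p : 'cV[R]_m) : Prop :=
  subvec (Phi^T *m p) (supp x0) = map_mx Num.sg (subvec x0 (supp x0)) /\
  (forall i, `|(Phi^T *m p) i 0| <= 1).

Definition sat_set {m n} (Phi : 'M[R]_(m, n)) (p : 'cV[R]_m) : {set 'I_n} :=
  [set i | `|(Phi^T *m p) i 0| == 1].

Definition in_T1 m (S : {set 'I_m}) (u : 'cV[R]_m) : Prop := supp u \subset S.

Definition is_orth_proj m (V : 'cV[R]_m -> Prop) (P : 'M[R]_m) : Prop :=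
  forall u : 'cV[R]_m, V (P *m u) /\
    (forall w, V w -> (u - P *m u)^T *m w = 0).

End Defs.

(* Main.v *)
Require Import Defs.
From HB Require Import structures.
From mathcomp Require Import all_boot all_order all_algebra.
From mathcomp Require Import lra.
Import Order.TTheory GRing.Theory Num.Theory.
Local Open Scope ring_scope.

Section Aux.
Variable R : realFieldType.

Lemma sum_over m (S : {set 'I_m}) (f : 'I_m -> R) :
  (forall i, i \notin S -> f i = 0) -> \sum_i f i = \sum_(k < #|S|) f (enum_val k).
Proof.
move=> H; rewrite (bigID (mem S)) /= [X in _ + X]big1 ?addr0; last by move=> i /H.
exact: big_enum_val.
Qed.

Lemma IdE_in m p (S : {set 'I_m}) (M : 'M[R]_(#|S|, p)) k j :
  (Id_cols R S *m M) (enum_val k) j = M k j.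
Proof.
rewrite mxE (bigD1 k) //= mxE eqxx mul1r big1 ?addr0 // => k' nk.
by rewrite mxE (inj_eq enum_val_inj) eq_sym (negbTE nk) mul0r.
Qed.

Lemma IdE_out m p (S : {set 'I_m}) (M : 'M[R]_(#|S|, p)) i j :
  i \notin S -> (Id_cols R S *m M) i j = 0.
Proof.
move=> iS; rewrite mxE big1 // => k _; rewrite mxE.
case: eqP => [Ei|]; last by rewrite mul0r.
by move: iS; rewrite Ei enum_valP.
Qed.

Lemma IdE_in' m p (S : {set 'I_m}) (M : 'M[R]_(#|S|, p)) i j (iS : i \in S) :
  (Id_cols R S *m M) i j = M (enum_rank_in iS i) j.
Proof. by rewrite -{1}(enum_rankK_in iS iS) IdE_in. Qed.

Lemma small_pos (T : finType) (P : pred T) (f : T -> R) :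
  (forall i, P i -> 0 < f i) -> exists2 e : R, 0 < e & forall i, P i -> e <= f i.
Proof.
move=> H.
suff: forall s : seq T, exists2 e : R, 0 < e & forall i, i \in s -> P i -> e <= f i.
  by case/(_ (enum T)) => e e0 He; exists e => // i; apply: He; rewrite mem_enum.
elim=> [|x s [e e0 He]]; first by exists 1.
case Px: (P x).
  exists (Num.min e (f x)); first by rewrite lt_min e0 H.
  move=> i; rewrite inE => /orP [/eqP -> _| iS Pi]; rewrite ge_min.
    by rewrite lexx orbT.
  by rewrite He.
exists e => // i; rewrite inE => /orP [/eqP -> | iS Pi]; first by rewrite Px.
exact: He.
Qed.

Lemma abs_lem (x y : R) : x != 0 -> `|y| <= `|x| -> `|x - y| = `|x| - Num.sg x * y.
Proof.
move=> xn; rewrite ler_norml => /andP [h1 h2].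
case: (ltrgtP x 0) => hx; last by move: xn; rewrite hx eqxx.
  rewrite ltr0_sg // ltr0_norm // in h1 h2 *; rewrite ler0_norm; lra.
rewrite gtr0_sg // gtr0_norm // in h1 h2 *; rewrite ger0_norm; lra.
Qed.


Lemma opt_dir m n (Phi : 'M[R]_(m,n)) (x0 : 'cV[R]_n) (p1 D : 'cV[R]_m) :
  in_D Phi x0 p1 -> (forall p, in_D Phi x0 p -> l1norm p1 <= l1norm p) ->
  (forall i, i \notin supp p1 -> D i 0 = 0) ->
  (forall k, k \in sat_set Phi p1 -> (Phi^T *m D) k 0 = 0) ->
  \sum_i Num.sg (p1 i 0) * D i 0 = 0.
Proof.
move=> [Heq Hb] Hmin.
have key : forall D : 'cV[R]_m, (forall i, i \notin supp p1 -> D i 0 = 0) ->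
  (forall k, k \in sat_set Phi p1 -> (Phi^T *m D) k 0 = 0) ->
  0 < \sum_i Num.sg (p1 i 0) * D i 0 -> False.
  move=> {}D HS HJ Hpos.
  set a := Phi^T *m p1; set b := Phi^T *m D.
  have P1 : forall i, i \in supp p1 -> 0 < `|p1 i 0| / (1 + `|D i 0|).
    move=> i; rewrite inE => hi; apply: divr_gt0; first by rewrite normr_gt0.
    have := normr_ge0 (D i 0); lra.
  have [e1 e1p He1] := small_pos _ _ _ P1.
  have P2 : forall k, k \notin sat_set Phi p1 -> 0 < (1 - `|a k 0|) / (1 + `|b k 0|).
    move=> k; rewrite inE => hk; apply: divr_gt0; last first.
      have := normr_ge0 (b k 0); lra.
    have := Hb k; rewrite -/a => h1.
    rewrite subr_gt0 lt_neqAle h1 andbT; exact: hk.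
  have [e2 e2p He2] := small_pos _ _ _ P2.
  set t := Num.min e1 e2.
  have tp : 0 < t by rewrite lt_min e1p e2p.
  have te1 : t <= e1 by rewrite ge_min lexx.
  have te2 : t <= e2 by rewrite ge_min lexx orbT.
  set p := p1 - t *: D.
  have Hp : Phi^T *m p = a - t *: b by rewrite /p mulmxBr scalemxAr.
  have IJ : forall k, k \in supp x0 -> k \in sat_set Phi p1.
    move=> k hk; move/matrixP: Heq => /(_ (enum_rank_in hk k) 0).
    rewrite mxE [in RHS]mxE [in RHS]mxE enum_rankK_in // => h.
    rewrite inE h normr_sg; move: hk; rewrite inE => ->; by [].
  have E : forall i, (a - t *: b) i 0 = a i 0 - t * b i 0 by move=> i; rewrite !mxE.
  have HDp : in_D Phi x0 p.
    split.
      rewrite -Heq Hp; apply/matrixP => k j; rewrite [LHS]mxE [RHS]mxE E.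
      by rewrite [b _ _]HJ ?mulr0 ?subr0 // IJ // enum_valP.
    move=> k; rewrite Hp E.
    case: (boolP (k \in sat_set Phi p1)) => hk.
      by rewrite [b _ _]HJ // mulr0 subr0; apply: Hb.
    have := He2 _ hk; rewrite -/a => h.
    have h2 : t * (1 + `|b k 0|) <= 1 - `|a k 0|.
      have hp : 0 < 1 + `|b k 0| by have := normr_ge0 (b k 0); lra.
      by rewrite -ler_pdivlMr //; apply: le_trans te2 h.
    apply: (le_trans (ler_normB _ _)); rewrite normrM ger0_norm ?ltW //.
    have := normr_ge0 (b k 0); nra.
  have := Hmin _ HDp.
  have -> : l1norm p = l1norm p1 - t * \sum_i Num.sg (p1 i 0) * D i 0.
    rewrite /l1norm mulr_sumr -sumrB; apply: eq_bigr => i _.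
    rewrite !mxE; case: (boolP (i \in supp p1)) => hi.
      have xn : p1 i 0 != 0 by move: hi; rewrite inE.
      have := He1 _ hi => h.
      have h2 : t * (1 + `|D i 0|) <= `|p1 i 0|.
        have hp : 0 < 1 + `|D i 0| by have := normr_ge0 (D i 0); lra.
        by rewrite -ler_pdivlMr //; apply: le_trans te1 h.
      rewrite abs_lem //; first by rewrite mulrCA.
      rewrite normrM ger0_norm ?ltW //; have := normr_ge0 (D i 0); nra.
    rewrite HS //; move: hi; rewrite inE negbK => /eqP ->.
    by rewrite !mulr0 subr0 normr0 subr0.
  have := mulr_gt0 tp Hpos; lra.
move=> HS HJ; set c := \sum_i _.
apply/eqP; apply/negPn/negP => hc.
apply: (key (c *: D)).
- by move=> i hi; rewrite mxE HS // mulr0.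
- by move=> k hk; rewrite -scalemxAr mxE HJ // mulr0.
- have -> : \sum_i Num.sg (p1 i 0) * (c *: D) i 0 = c * c.
    by rewrite /c mulr_sumr; apply: eq_bigr => i _; rewrite mxE mulrCA.
  by rewrite lt0r mulf_neq0 //= -expr2 sqr_ge0.
Qed.


Lemma proj_entry m (S : {set 'I_m}) (P : 'M[R]_m) (u : 'cV[R]_m) i :
  is_orth_proj (in_T1 S) P -> (P *m u) i 0 = if i \in S then u i 0 else 0.
Proof.
move=> HP; have [HV Ho] := HP u.
case: ifP => iS; last first.
  apply/eqP; apply: contraFT iS => h.
  by move/subsetP: HV; apply; rewrite inE.
have Hw : in_T1 S (delta_mx i (0 : 'I_1) : 'cV[R]_m).
  apply/subsetP => k; rewrite inE mxE.
  have [-> //|nk] := eqVneq k i.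
  by rewrite /= ?eqxx.
move/matrixP: (Ho _ Hw) => /(_ 0 0).
rewrite -colE !mxE => /eqP; rewrite subr_eq0 => /eqP ->; by [].
Qed.

End Aux.

Theorem lemma2 (R : realFieldType) (m n : nat) (Phi : 'M[R]_(m, n))
  (x0 : 'cV[R]_n) (p1 : 'cV[R]_m) :
  x0 != 0 ->
  identifiable Phi x0 ->
  in_D Phi x0 p1 ->
  (forall p, in_D Phi x0 p -> l1norm p1 <= l1norm p) ->
  let J := sat_set Phi p1 in
  let S := supp p1 in
  let sJ := subvec (Phi^T *m p1) J in
  let qS := map_mx Num.sg (subvec p1 S) in
  \rank (subm Phi S J) = minn #|S| #|J| ->
  (forall S' : {set 'I_m}, #|S'| < #|J| ->
     ~ exists y : 'cV[R]_#|S'|, sJ = (subm Phi S' J)^T *m y)%N ->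
  (forall J' : {set 'I_n}, #|J'| < #|S| ->
     ~ exists z : 'cV[R]_#|J'|, qS = subm Phi S J' *m z)%N ->
  (#|S| = #|J| /\
   exists B : 'M[R]_(#|J|, #|S|),
     subm Phi S J *m B = 1%:M /\ B *m subm Phi S J = 1%:M) /\
  (forall P : 'M[R]_m, is_orth_proj (in_T1 S) P ->
     P *m subcols Phi J = Id_cols R S *m subm Phi S J /\
     (forall v : 'cV[R]_#|J|, P *m subcols Phi J *m v = 0 -> v = 0)).
Proof.
move=> x0nz ident HD Hmin J S sJ qS Hrank H1 H2.
have Hsj : sJ = (subm Phi S J)^T *m subvec p1 S.
  apply/matrixP => j z; rewrite mxE [RHS]mxE.
  rewrite mxE (@sum_over _ _ S) => [|i iS]; last first.
    by rewrite mxE; move: iS; rewrite inE negbK => /eqP ->; rewrite mulr0.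
  by apply: eq_bigr => k _; rewrite !mxE.
have HqS : exists z, qS = subm Phi S J *m z.
  suff: (qS^T <= (subm Phi S J)^T)%MS.
    case/submxP => z Hz; exists z^T; apply: trmx_inj; by rewrite trmx_mul trmxK Hz.
  apply/negPn/negP => Hn; move: Hn; rewrite submxE.
  set K := cokermx _ => Hn.
  case: (pickP (fun j => (qS^T *m K) 0 j != 0)) => [j Hj | H0]; last first.
    move/negP: Hn; apply; apply/eqP/matrixP => i j; rewrite (ord1 i).
    by move: (H0 j) => /negbFE/eqP ->; rewrite mxE.
  set d := col j K.
  have := @opt_dir _ _ _ Phi x0 p1 (Id_cols R S *m d) HD Hmin.
  have -> : \sum_i Num.sg (p1 i 0) * (Id_cols R S *m d) i 0 = (qS^T *m K) 0 j.
    rewrite (@sum_over _ _ S) => [|i iS]; last by rewrite IdE_out ?mulr0.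
    rewrite mxE; apply: eq_bigr => k _; by rewrite IdE_in !mxE.
  move=> h; move/eqP: Hj; apply; apply: h.
    by move=> i iS; rewrite IdE_out.
  move=> k hk; rewrite mxE (@sum_over _ _ S) => [|i iS]; last by rewrite IdE_out ?mulr0.
  have := mulmx_coker ((subm Phi S J)^T); rewrite -/K => /matrixP /(_ (enum_rank_in hk k) j).
  rewrite !mxE => h; apply: (eq_trans _ h); apply: eq_bigr => l _; by rewrite IdE_in !mxE enum_rankK_in.
have Hcard : #|S| = #|J|.
  case: (ltngtP #|S| #|J|) => // h; exfalso.
    by apply: (H1 S h); exists (subvec p1 S).
  exact: (H2 J h).
have [B1 HB1] : exists B, subm Phi S J *m B = 1%:M.
  by apply/row_freeP; rewrite /row_free Hrank Hcard minnn.
have [B2 HB2] : exists B, B *m subm Phi S J = 1%:M.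
  by apply/row_fullP; rewrite /row_full Hrank Hcard minnn.
have EB : B1 = B2.
  by rewrite -[B2]mulmx1 -HB1 mulmxA HB2 mul1mx.
split; first by split=> //; exists B1; rewrite HB1 EB HB2.
move=> P HP.
have EP : P *m subcols Phi J = Id_cols R S *m subm Phi S J.
  apply/matrixP => i j.
  have -> : (P *m subcols Phi J) i j = (col j (P *m subcols Phi J)) i 0 by rewrite !mxE.
  rewrite colE -mulmxA -colE (@proj_entry _ _ _ _ _ _ HP); case: ifP => iS.
    by rewrite IdE_in' !mxE enum_rankK_in.
  by rewrite IdE_out // iS.
split=> // v; rewrite EP -mulmxA => Hv.
have Hw : subm Phi S J *m v = 0.
  apply/matrixP => k z; rewrite (ord1 z).
  by move/matrixP: Hv => /(_ (enum_val k) 0); rewrite IdE_in !mxE.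
by rewrite -[v]mul1mx -HB2 -mulmxA Hw mulmx0.
Qed.
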